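(* For a graph $G$, $\gamma_{(2,1,0)}(G)=3$ if and only if $\gamma_{\times2}(G)=\gamma(G)+1=3$.
   Context: All graphs are finite and simple; $N(v)$ is the open neighbourhood and $N[v]=N(v)\cup\{v\}$. $\gamma_{(2,1,0)}(G)$ is the minimum of $\sum_v f(v)$ over functions $f:V(G)\to\{0,1,2\}$ such that $\sum_{u\in N(v)}f(u)\ge2$ whenever $f(v)=0$ and $\sum_{u\in N(v)}f(u)\ge1$ whenever $f(v)=1$. $\gamma(G)$ is the domination number and $\gamma_{\times2}(G)$ is the minimum size of $D\subseteq V(G)$ with $|N[v]\cap D|\ge2$ for every $v\in V(G)$ (defined when $G$ has no isolated vertex). *)

(* Defs.v *)
(* A finite simple graph on vertex type T : finType is a
   symmetric irreflexive relation e : rel T. *)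
From mathcomp Require Import all_boot all_order.
Set Implicit Arguments. Unset Strict Implicit. Unset Printing Implicit Defensive.

Section Graphs.
Variables (T : finType) (e : rel T).

Definition nbh (v : T) : {set T} := [set u | e v u].
Definition cnbh (v : T) : {set T} := v |: nbh v.

Definition no_isolated : Prop := forall v : T, exists u, e v u.

Definition is_210dom (f : {ffun T -> 'I_3}) : bool :=
  [forall v, ((nat_of_ord (f v) == 0) ==> (2 <= \sum_(u in nbh v) nat_of_ord (f u)))
          && ((nat_of_ord (f v) == 1) ==> (1 <= \sum_(u in nbh v) nat_of_ord (f u)))].

Definition weight (f : {ffun T -> 'I_3}) : nat := \sum_v nat_of_ord (f v).

(* minimum weight; the constant-2 function is always admissible with weight
   2 * #|T|, so the default value 2 * #|T| does not affect the minimum *)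
Definition gamma210 : nat :=
  \big[minn/(2 * #|T|)]_(f : {ffun T -> 'I_3} | is_210dom f) weight f.

Definition dominating (D : {set T}) : bool :=
  [forall v, (cnbh v :&: D) != set0].

(* domination number; setT is always dominating *)
Definition gamma : nat := \big[minn/#|T|]_(D : {set T} | dominating D) #|D|.

Definition double_dominating (D : {set T}) : bool :=
  [forall v, 2 <= #|cnbh v :&: D|].

(* double domination number; meaningful when there is no isolated vertex,
   in which case setT is double dominating, so the default #|T| is harmless *)
Definition gamma_x2 : nat :=
  \big[minn/#|T|]_(D : {set T} | double_dominating D) #|D|.

End Graphs.

(* Main.v *)
Require Import Defs.
From mathcomp Require Import all_boot all_order.
From mathcomp Require Import zify.
Set Implicit Arguments. Unset Strict Implicit. Unset Printing Implicit Defensive.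

Lemma bigmin_le_seq (I : eqType) (r : seq I) (P : pred I) (F : I -> nat) d x :
  x \in r -> P x -> \big[minn/d]_(i <- r | P i) F i <= F x.
Proof.
elim: r => //= y r IH; rewrite inE big_cons => /orP [/eqP <- Px|xr Px].
  by rewrite Px geq_minl.
case: (P y); last exact: IH.
by rewrite geq_min IH ?orbT.
Qed.

Lemma bigmin_attain_seq (I : eqType) (r : seq I) (P : pred I) (F : I -> nat) d :
  \big[minn/d]_(i <- r | P i) F i = d \/
  exists2 x, P x & \big[minn/d]_(i <- r | P i) F i = F x.
Proof.
elim: r => [|y r IH]; first by left; rewrite big_nil.
rewrite big_cons; case Py: (P y) => //=.
case: (leqP (F y) (\big[minn/d]_(i <- r | P i) F i)) => h.
  by right; exists y.
exact: IH.
Qed.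

Lemma bigmin_le (I : finType) (P : pred I) (F : I -> nat) d x :
  P x -> \big[minn/d]_(i | P i) F i <= F x.
Proof. by move=> Px; apply: bigmin_le_seq => //; rewrite mem_index_enum. Qed.

Lemma bigmin_attain (I : finType) (P : pred I) (F : I -> nat) d x0 :
  P x0 -> F x0 <= d ->
  exists2 x, P x & \big[minn/d]_(i | P i) F i = F x.
Proof.
move=> Px0 le0.
have le := bigmin_le F d Px0.
case: (bigmin_attain_seq (index_enum I) P F d) => [E|//].
by exists x0 => //; apply/eqP; rewrite eqn_leq le /= E le0.
Qed.

Lemma sum_ind (T : finType) (A S : {set T}) (F : T -> nat) :
  (forall u, F u = (u \in S)) -> \sum_(u in A) F u = #|A :&: S|.
Proof.
move=> H; rewrite -[#|A :&: S|]sum1_card big_mkcond [RHS]big_mkcond; apply eq_bigr => u _.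
by rewrite in_setI H; case: (u \in A); case: (u \in S).
Qed.

Lemma sum_ind_all (T : finType) (S : {set T}) (F : T -> nat) :
  (forall u, F u = (u \in S)) -> \sum_u F u = #|S|.
Proof.
move=> H; rewrite -[#|S|]sum1_card [RHS]big_mkcond; apply eq_bigr => u _.
by rewrite H; case: (u \in S).
Qed.

Lemma cnbh_card (T : finType) (e : rel T) (e_irr : irreflexive e) v (S : {set T}) :
  #|cnbh e v :&: S| = (v \in S) + #|nbh e v :&: S|.
Proof.
case vS: (v \in S).
  have -> : cnbh e v :&: S = v |: (nbh e v :&: S).
    apply/setP => u; rewrite !inE; case: (u =P v) => [->|] //=.
  by rewrite cardsU1 !inE e_irr.
have -> : cnbh e v :&: S = nbh e v :&: S.
  apply/setP => u; rewrite !inE; case: (u =P v) => [->|] //=.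
  by rewrite vS !andbF.
by [].
Qed.

Lemma gamma_attain (T : finType) (e : rel T) :
  exists2 D, dominating e D & gamma e = #|D|.
Proof.
apply: (@bigmin_attain _ _ _ _ setT); last by rewrite cardsT.
apply/forallP => v; apply/set0Pn; exists v; by rewrite /cnbh !inE eqxx.
Qed.

Lemma gamma_x2_attain (T : finType) (e : rel T) (e_irr : irreflexive e)
  (noiso : no_isolated e) :
  exists2 D, double_dominating e D & gamma_x2 e = #|D|.
Proof.
apply: (@bigmin_attain _ _ _ _ setT); last by rewrite cardsT.
apply/forallP => v; rewrite cnbh_card // in_setT setIT.
have [u evu] := noiso v.
have : 0 < #|nbh e v| by apply/card_gt0P; exists u; rewrite inE.
by case: #|nbh e v|.
Qed.

Lemma gamma210_attain (T : finType) (e : rel T) :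
  exists2 f, is_210dom e f & gamma210 e = weight f.
Proof.
apply: (@bigmin_attain _ _ _ _ [ffun _ => ord_max]).
  by apply/forallP => v; rewrite ffunE.
rewrite /weight (eq_bigr (fun _ => 2)); last by move=> i _; rewrite ffunE.
by rewrite sum_nat_const mulnC.
Qed.

Lemma dom_bound (T : finType) (e : rel T) (D : {set T}) :
  dominating e D -> gamma210 e <= 2 * #|D|.
Proof.
move=> hD.
pose f : {ffun T -> 'I_3} := [ffun u => inord (2 * (u \in D))].
have fE u : nat_of_ord (f u) = 2 * (u \in D).
  by rewrite ffunE inordK //; case: (u \in D).
have -> : 2 * #|D| = weight f.
  rewrite /weight (eq_bigr _ (fun u _ => fE u)) -big_distrr /=.
  by rewrite (sum_ind_all (S := D)).
apply: bigmin_le; apply/forallP => v; rewrite fE.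
case vD: (v \in D) => //=.
have /set0Pn [u] := forallP hD v.
rewrite !inE => /andP [/orP [/eqP uv|evu] uD].
  by rewrite uv vD in uD.
by rewrite (bigD1 u) ?inE //= fE uD muln1 leq_addr.
Qed.

Lemma ddom_bound (T : finType) (e : rel T) (e_irr : irreflexive e) (D : {set T}) :
  double_dominating e D -> gamma210 e <= #|D|.
Proof.
move=> hD.
pose f : {ffun T -> 'I_3} := [ffun u => inord (u \in D)].
have fE u : nat_of_ord (f u) = (u \in D).
  by rewrite ffunE inordK //; case: (u \in D).
have -> : #|D| = weight f by rewrite /weight (sum_ind_all (S := D)).
apply: bigmin_le; apply/forallP => v; rewrite fE (sum_ind _ fE).
have := forallP hD v; rewrite cnbh_card //.
by case: (v \in D) => /=; case: #|_| => [|[|k]].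
Qed.

Lemma dd_dom (T : finType) (e : rel T) (D : {set T}) x :
  double_dominating e D -> x \in D -> gamma e <= #|D| - 1.
Proof.
move=> hD xD.
have -> : #|D| - 1 = #|D :\ x| by rewrite (cardsD1 x D) xD add1n subn1.
apply: bigmin_le; apply/forallP => v; rewrite setIDA.
have := forallP hD v; rewrite (cardsD1 x) -card_gt0.
by case: (x \in _); case: #|_| => [|[|k]].
Qed.

Lemma two_dom (T : finType) (e : rel T) (e_irr : irreflexive e)
  (f : {ffun T -> 'I_3}) a :
  is_210dom e f -> nat_of_ord (f a) = 2 -> weight f <= 3 -> gamma e <= 1.
Proof.
move=> hf fa w3.
have -> : 1 = #|[set a]| by rewrite cards1.
apply: bigmin_le; apply/forallP => v; apply/set0Pn; exists a.
rewrite /cnbh !inE eqxx andbT.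
case: (a =P v) => //= av; apply/negPn/negP => nva.
have hs : \sum_(u in nbh e v) nat_of_ord (f u) + nat_of_ord (f a)
          + nat_of_ord (f v) <= weight f.
  rewrite /weight [X in _ <= X](bigD1 a) //= (@bigD1 _ _ _ _ v (fun i => i != a)) /=; last first.
    by rewrite eq_sym; apply/eqP.
  suff : \sum_(u in nbh e v) nat_of_ord (f u) <= \sum_(i | (i != a) && (i != v)) nat_of_ord (f i) by lia.
  rewrite [X in X <= _]big_mkcond [X in _ <= X]big_mkcond /=.
  apply: leq_sum => u _; rewrite inE.
  case evu: (e v u) => //.
  case: (u =P a) => [ua|_]; first by move: nva; rewrite -ua evu.
  case: (u =P v) => [uv|_] //; by move: evu; rewrite uv e_irr.
have := forallP hf v.
move: hs; rewrite fa.
case: (f v) => [[|[|[|k]]] ?] //=; lia.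
Qed.

Lemma one_dd (T : finType) (e : rel T) (e_irr : irreflexive e)
  (f : {ffun T -> 'I_3}) :
  is_210dom e f -> (forall v, nat_of_ord (f v) <= 1) -> gamma_x2 e <= weight f.
Proof.
move=> hf h1.
pose S := [set v | nat_of_ord (f v) == 1].
have fE u : nat_of_ord (f u) = (u \in S).
  by rewrite inE; case: (f u) (h1 u) => [[|[|k]] ?].
rewrite /weight (sum_ind_all fE).
apply: bigmin_le; apply/forallP => v; rewrite cnbh_card //.
have := forallP hf v; rewrite (sum_ind _ fE) fE.
by case: (v \in S) => /=; case: #|_| => [|[|k]].
Qed.

Theorem theorem37 (T : finType) (e : rel T)
  (e_sym : symmetric e) (e_irr : irreflexive e)
  (noiso : no_isolated e) :
  gamma210 e = 3 <-> (gamma_x2 e = (gamma e).+1 /\ (gamma e).+1 = 3).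
Proof.
have [D0 hD0 g0] := gamma_attain e.
have [D2 hD2 g2] := gamma_x2_attain e_irr noiso.
have [f0 hf0 gf] := gamma210_attain e.
have b1 := dom_bound hD0; rewrite -g0 in b1.
have b2 := ddom_bound e_irr hD2; rewrite -g2 in b2.
have cases : (exists a, nat_of_ord (f0 a) = 2) \/ (forall v, nat_of_ord (f0 v) <= 1).
  case: (boolP [exists a, nat_of_ord (f0 a) == 2]) => [/existsP [a /eqP ha]|].
    by left; exists a.
  rewrite negb_exists => /forallP h; right => v.
  by have := h v; case: (f0 v) => [[|[|[|k]]] ?].
split.
- move=> g3.
  have G2 : 2 <= gamma e by lia.
  case: cases => [[a ha]|h1].
    have := two_dom e_irr hf0 ha; rewrite -gf g3 => /(_ isT); lia.
  have := one_dd e_irr hf0 h1; rewrite -gf g3 => x3.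
  have x3' : gamma_x2 e = 3 by lia.
  have : 0 < #|D2| by lia.
  case/card_gt0P => x xD.
  have := dd_dom hD2 xD; rewrite -g2; lia.
- move=> [hx hg].
  case: cases => [[a ha]|h1].
    have := two_dom e_irr hf0 ha; rewrite -gf; lia.
  have := one_dd e_irr hf0 h1; rewrite -gf; lia.
Qed.
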